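(* Let $(\mathcal{C},\mathbb{E},\mathfrak{s})$ be an extriangulated category with enough injective objects and enough projective morphisms, and let $\mathbb{F}\subseteq\mathbb{E}$ be an additive subfunctor having enough injective morphisms. Then: (1) the pair $\big({}^{\perp_{\mathbb{E}}}(\mathbb{F}\text{-}\mathrm{inj}),\ ({}^{\perp_{\mathbb{E}}}(\mathbb{F}\text{-}\mathrm{inj}))^{\perp_{\mathbb{E}}}\big)$ is a complete $\mathbb{E}$-cotorsion pair of ideals; (2) $\mathrm{Ph}(\mathbb{F})^{\perp_{\mathbb{E}}}=\mathrm{Ph}(\mathbb{F})^\star\text{-}\mathrm{inj}$, and $\mathrm{Ph}(\mathbb{F})^{\perp_{\mathbb{E}}}$ is the minimal ideal containing $\mathbb{F}\text{-}\mathrm{inj}$ and satisfying property (C), i.e. it contains $\mathbb{F}\text{-}\mathrm{inj}$, satisfies (C), and is contained in every ideal that contains $\mathbb{F}\text{-}\mathrm{inj}$ and satisfies (C); (3) $\mathrm{Ph}(\mathbb{F})^\star$ is the maximal additive subfunctor of $\mathbb{F}$ having enough special injective morphisms, i.e. $\mathrm{Ph}(\mathbb{F})^\star\subseteq\mathbb{F}$, it has enough special injective morphisms, and it contains every additive subfunctor $\mathbb{F}'\subseteq\mathbb{F}$ having enough special injective morphisms.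
   Context: An extriangulated category $(\mathcal{C},\mathbb{E},\mathfrak{s})$ (Nakaoka–Palu): additive $\mathcal{C}$, biadditive $\mathbb{E}:\mathcal{C}^{\mathrm{op}}\times\mathcal{C}\to\mathrm{Ab}$, additive realization $\mathfrak{s}$ assigning to each $\delta\in\mathbb{E}(C,A)$ an equivalence class of sequences $A\to B\to C$, forming $\mathbb{E}$-triangles $A\to B\to C\overset{\delta}{\dashrightarrow}$, satisfying (ET1)–(ET4), (ET3)$^{\mathrm{op}}$, (ET4)$^{\mathrm{op}}$. Notation $a_\star\delta=\mathbb{E}(C,a)(\delta)$, $c^\star\delta=\mathbb{E}(c,A)(\delta)$; a morphism of $\mathbb{E}$-triangles is a commuting triple $(a,b,c)$ with $a_\star\delta=c^\star\delta'$. Injective object $E$: $\mathbb{E}(C,E)=0$ for all $C$; enough injective objects: every $A$ admits an $\mathbb{E}$-triangle $A\to E\to C\overset{\delta}{\dashrightarrow}$ with $E$ injective. Enough projective morphisms: every $C$ admits an $\mathbb{E}$-triangle $K\to P\xrightarrow{p}C\overset{\gamma}{\dashrightarrow}$ with $p^\star\delta=0$ for all $\delta\in\mathbb{E}(C,A)$. Ideal: class of morphisms with zeros, closed under sums and two-sided composition. Additive subfunctor $\mathbb{F}$: subgroups $\mathbb{F}(C,A)\subseteq\mathbb{E}(C,A)$ stable under $a_\star,c^\star$; $\mathbb{F}$-triangles have extension in $\mathbb{F}$. $\mathrm{Ph}(\mathbb{F})$: morphisms $\varphi:X\to C$ with $\varphi^\star\delta\in\mathbb{F}(X,A)$ for all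 $\delta\in\mathbb{E}(C,A)$. $\mathbb{F}\text{-}\mathrm{inj}$: $i:A\to Y$ with $i_\star\delta=0$ for all $\delta\in\mathbb{F}(C,A)$. For an ideal $\mathcal{I}$, $\mathcal{I}^\star(X,A)=\{i^\star\delta\mid i\in\mathcal{I}(X,C),\delta\in\mathbb{E}(C,A)\}$. $\mathbb{F}$ has enough injective morphisms: every $A$ admits an $\mathbb{F}$-triangle $A\xrightarrow{e}B\to C\overset{\delta}{\dashrightarrow}$ with $e\in\mathbb{F}\text{-}\mathrm{inj}$; enough special injective morphisms: moreover there is an $\mathbb{E}$-triangle $A\to B'\to C'\overset{\delta'}{\dashrightarrow}$ and a morphism $(\mathrm{id}_A,b,\varphi)$ from the former to it with $\varphi\in\mathrm{Ph}(\mathbb{F})$. $\mathcal{M}^{\perp_{\mathbb{E}}}=\{g:A\to Y\mid m^\star g_\star\delta=0\ \forall m\in\mathcal{M},\,m:X\to C,\ \forall\delta\in\mathbb{E}(C,A)\}$; ${}^{\perp_{\mathbb{E}}}\mathcal{M}=\{g:X\to C\mid g^\star m_\star\delta=0\ \forall m\in\mathcal{M},\,m:A\to Y,\ \forall\delta\in\mathbb{E}(C,A)\}$. $\mathbb{E}$-cotorsion pair: $\mathcal{I}={}^{\perp_{\mathbb{E}}}\mathcal{J}$, $\mathcal{J}=\mathcal{I}^{\perp_{\mathbb{E}}}$; complete if $\mathcal{I}$ is special precovering (each $C$ has $i:X\to C$ in $\mathcal{I}$ with a morphism $(j,b,\mathrm{id}_C)$ of $\mathbb{E}$-triangles from some $A\to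 B\to C\overset{\delta}{\dashrightarrow}$ to some $A'\to X\xrightarrow{i}C\overset{\delta'}{\dashrightarrow}$, $j\in\mathcal{I}^{\perp_{\mathbb{E}}}$) and $\mathcal{J}$ is special preenveloping (each $A$ has $e:A\to X$ in $\mathcal{J}$ with a morphism $(\mathrm{id}_A,b,j)$ from some $A\xrightarrow{e}X\to Y\overset{\delta}{\dashrightarrow}$ to some $A\to B\to C\overset{\delta'}{\dashrightarrow}$, $j\in{}^{\perp_{\mathbb{E}}}\mathcal{J}$). Property (C) of an ideal $\mathcal{K}$: for every morphism of $\mathbb{E}$-triangles $(f,g,h)$ from $A\to B\to E\overset{\gamma}{\dashrightarrow}$ to $X\to Y\to Z\overset{\delta}{\dashrightarrow}$ with $f\in\mathcal{K}$ and $E$ injective, one has $g\in\mathcal{K}$. *)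

(* Defs.v *)
From HB Require Import structures.
From mathcomp Require Import all_boot all_algebra.
Set Implicit Arguments. Unset Strict Implicit. Unset Printing Implicit Defensive.
Import GRing.Theory.
Local Open Scope ring_scope.

Record PreAddCat := {
  Obj :> Type;
  Hom : Obj -> Obj -> zmodType;
  comp : forall A B C : Obj, Hom B C -> Hom A B -> Hom A C;
  idm : forall A : Obj, Hom A A;
  comp_assoc : forall (A B C D : Obj) (h : Hom C D) (g : Hom B C) (f : Hom A B),
      comp h (comp g f) = comp (comp h g) f;
  comp_idl : forall (A B : Obj) (f : Hom A B), comp (idm B) f = f;
  comp_idr : forall (A B : Obj) (f : Hom A B), comp f (idm A) = f;
  comp_addl : forall (A B C : Obj) (g1 g2 : Hom B C) (f : Hom A B),
      comp (g1 + g2) f = comp g1 f + comp g2 f;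
  comp_addr : forall (A B C : Obj) (g : Hom B C) (f1 f2 : Hom A B),
      comp g (f1 + f2) = comp g f1 + comp g f2
}.
Arguments Hom {p}.
Arguments comp {p A B C}.
Arguments idm {p}.

Section PreAdd.
Variable C : PreAddCat.

Definition is_iso (A B : C) (f : Hom A B) : Prop :=
  exists g : Hom B A, comp g f = idm A /\ comp f g = idm B.

Definition is_zero_object (Z : C) : Prop := idm Z = 0.

Definition is_biproduct (A B S : C) (i1 : Hom A S) (i2 : Hom B S)
    (p1 : Hom S A) (p2 : Hom S B) : Prop :=
  [/\ comp p1 i1 = idm A, comp p2 i2 = idm B, comp p2 i1 = 0, comp p1 i2 = 0
    & comp i1 p1 + comp i2 p2 = idm S].

Definition additive_cat : Prop :=
  (exists Z : C, is_zero_object Z) /\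
  forall A B : C, exists (S : C) (i1 : Hom A S) (i2 : Hom B S)
    (p1 : Hom S A) (p2 : Hom S B), is_biproduct i1 i2 p1 p2.
End PreAdd.

(* (ET1): biadditive functor E : C^op x C -> Ab.  Ext C A = E(C,A).    *)
Record ExtFun (C : PreAddCat) := {
  Ext : C -> C -> zmodType;
  pull : forall (C' C0 A : C), Hom C' C0 -> Ext C0 A -> Ext C' A;
  push : forall (C0 A A' : C), Hom A A' -> Ext C0 A -> Ext C0 A';
  pull_add : forall C' C0 A (c : Hom C' C0) (d1 d2 : Ext C0 A),
      pull c (d1 + d2) = pull c d1 + pull c d2;
  push_add : forall C0 A A' (a : Hom A A') (d1 d2 : Ext C0 A),
      push a (d1 + d2) = push a d1 + push a d2;
  pull_addm : forall C' C0 A (c1 c2 : Hom C' C0) (d : Ext C0 A),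
      pull (c1 + c2) d = pull c1 d + pull c2 d;
  push_addm : forall C0 A A' (a1 a2 : Hom A A') (d : Ext C0 A),
      push (a1 + a2) d = push a1 d + push a2 d;
  pull_id : forall C0 A (d : Ext C0 A), pull (idm C0) d = d;
  push_id : forall C0 A (d : Ext C0 A), push (idm A) d = d;
  pull_comp : forall C'' C' C0 A (c : Hom C' C0) (c' : Hom C'' C') (d : Ext C0 A),
      pull (comp c c') d = pull c' (pull c d);
  push_comp : forall C0 A A' A'' (a : Hom A A') (a' : Hom A' A'') (d : Ext C0 A),
      push (comp a' a) d = push a' (push a d);
  push_pull : forall C' C0 A A' (a : Hom A A') (c : Hom C' C0) (d : Ext C0 A),
      push a (pull c d) = pull c (push a d)
}.
Arguments Ext {C}.
Arguments pull {C e C' C0 A}.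
Arguments push {C e C0 A A'}.

(* real d x y  <->  A -x-> B -y-> C is in the class s(d), d in E(C,A)  *)
Section ETaxioms.
Variables (C : PreAddCat) (E : ExtFun C).
Variable real : forall A B C0 : C, Ext E C0 A -> Hom A B -> Hom B C0 -> Prop.
Arguments real {A B C0}.

Definition equiv_seq (A B B' C0 : C) (x : Hom A B) (y : Hom B C0)
    (x' : Hom A B') (y' : Hom B' C0) : Prop :=
  exists b : Hom B B', is_iso b /\ comp b x = x' /\ comp y' b = y.

Definition real_is_class : Prop :=
  forall (A C0 : C) (d : Ext E C0 A),
    (exists (B : C) (x : Hom A B) (y : Hom B C0), real d x y) /\
    (forall (B B' : C) (x : Hom A B) (y : Hom B C0) (x' : Hom A B') (y' : Hom B' C0),
        real d x y -> (real d x' y' <-> equiv_seq x y x' y')).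

Definition tri_mor (A B C0 A' B' C' : C) (d : Ext E C0 A) (x : Hom A B) (y : Hom B C0)
    (d' : Ext E C' A') (x' : Hom A' B') (y' : Hom B' C')
    (a : Hom A A') (b : Hom B B') (c : Hom C0 C') : Prop :=
  comp b x = comp x' a /\ comp c y = comp y' b /\ push a d = pull c d'.

Definition real_lifts : Prop :=
  forall (A B C0 A' B' C' : C) (d : Ext E C0 A) (x : Hom A B) (y : Hom B C0)
    (d' : Ext E C' A') (x' : Hom A' B') (y' : Hom B' C') (a : Hom A A') (c : Hom C0 C'),
    real d x y -> real d' x' y' -> push a d = pull c d' ->
    exists b : Hom B B', comp b x = comp x' a /\ comp c y = comp y' b.

Definition real_zero : Prop :=
  forall (A C0 S : C) (i1 : Hom A S) (i2 : Hom C0 S) (p1 : Hom S A) (p2 : Hom S C0),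
    is_biproduct i1 i2 p1 p2 -> real (0 : Ext E C0 A) i1 p2.

Definition real_sum : Prop :=
  forall (A B C0 A' B' C' : C) (d : Ext E C0 A) (x : Hom A B) (y : Hom B C0)
    (d' : Ext E C' A') (x' : Hom A' B') (y' : Hom B' C')
    (SA SB SC : C)
    (ia : Hom A SA) (ia' : Hom A' SA) (pa : Hom SA A) (pa' : Hom SA A')
    (ib : Hom B SB) (ib' : Hom B' SB) (pb : Hom SB B) (pb' : Hom SB B')
    (ic : Hom C0 SC) (ic' : Hom C' SC) (pc : Hom SC C0) (pc' : Hom SC C'),
    is_biproduct ia ia' pa pa' -> is_biproduct ib ib' pb pb' ->
    is_biproduct ic ic' pc pc' ->
    real d x y -> real d' x' y' ->
    real (push ia (pull pc d) + push ia' (pull pc' d'))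
         (comp ib (comp x pa) + comp ib' (comp x' pa'))
         (comp ic (comp y pb) + comp ic' (comp y' pb')).

Definition ET3 : Prop :=
  forall (A B C0 A' B' C' : C) (d : Ext E C0 A) (x : Hom A B) (y : Hom B C0)
    (d' : Ext E C' A') (x' : Hom A' B') (y' : Hom B' C') (a : Hom A A') (b : Hom B B'),
    real d x y -> real d' x' y' -> comp b x = comp x' a ->
    exists c : Hom C0 C', comp c y = comp y' b /\ push a d = pull c d'.

Definition ET3op : Prop :=
  forall (A B C0 A' B' C' : C) (d : Ext E C0 A) (x : Hom A B) (y : Hom B C0)
    (d' : Ext E C' A') (x' : Hom A' B') (y' : Hom B' C') (b : Hom B B') (c : Hom C0 C'),
    real d x y -> real d' x' y' -> comp c y = comp y' b ->
    exists a : Hom A A', comp b x = comp x' a /\ push a d = pull c d'.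

Definition ET4 : Prop :=
  forall (A B C0 D F : C) (f : Hom A B) (f' : Hom B D) (g : Hom B C0) (g' : Hom C0 F)
    (d : Ext E D A) (d' : Ext E F B),
    real d f f' -> real d' g g' ->
    exists (E0 : C) (h' : Hom C0 E0) (dd : Hom D E0) (e : Hom E0 F) (d'' : Ext E E0 A),
      real d'' (comp g f) h' /\ comp dd f' = comp h' g /\ comp e h' = g' /\
      real (push f' d') dd e /\ pull dd d'' = d /\ push f d'' = pull e d'.

Definition ET4op : Prop :=
  forall (A B C0 D F : C) (f' : Hom D A) (f : Hom A B) (g' : Hom F B) (g : Hom B C0)
    (d : Ext E B D) (d' : Ext E C0 F),
    real d f' f -> real d' g' g ->
    exists (E0 : C) (h' : Hom E0 A) (dd : Hom D E0) (e : Hom E0 F) (d'' : Ext E C0 E0),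
      real d'' h' (comp g f) /\ comp h' dd = f' /\ comp f h' = comp g' e /\
      real (pull g' d) dd e /\ push e d'' = d' /\ push dd d = pull g d''.

End ETaxioms.

Record ExtriCat := {
  ecat :> PreAddCat;
  eE : ExtFun ecat;
  ereal : forall A B C0 : ecat, Ext eE C0 A -> Hom A B -> Hom B C0 -> Prop;
  e_additive : additive_cat ecat;
  e_class : real_is_class ereal;
  e_lifts : real_lifts ereal;
  e_zero : real_zero ereal;
  e_sum : real_sum ereal;
  e_ET3 : ET3 ereal;
  e_ET3op : ET3op ereal;
  e_ET4 : ET4 ereal;
  e_ET4op : ET4op ereal
}.
Arguments ereal {e A B C0}.

Unset Implicit Arguments.
Section Paper.
Variable X : ExtriCat.
Local Notation E := (Ext (eE X)).
Local Notation real := (@ereal X).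

Definition Mor := forall A B : X, Hom A B -> Prop.
Definition SubF := forall C A : X, E C A -> Prop.

Definition mor_sub (M N : Mor) : Prop := forall A B (f : Hom A B), M A B f -> N A B f.
Definition mor_eq (M N : Mor) : Prop := forall A B (f : Hom A B), M A B f <-> N A B f.
Definition subF_sub (F G : SubF) : Prop := forall C A (d : E C A), F C A d -> G C A d.

Definition is_ideal (I : Mor) : Prop :=
  [/\ forall A B : X, I A B 0,
      forall A B (f g : Hom A B), I A B f -> I A B g -> I A B (f + g)
    & forall (A B C D : X) (u : Hom C D) (f : Hom B C) (v : Hom A B),
        I B C f -> I A D (comp u (comp f v))].

Definition additive_subfunctor (F : SubF) : Prop :=
  [/\ forall C A : X, F C A 0,
      forall C A (d1 d2 : E C A), F C A d1 -> F C A d2 -> F C A (d1 + d2),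
      forall C A (d : E C A), F C A d -> F C A (- d),
      forall C A A' (a : Hom A A') (d : E C A), F C A d -> F C A' (push a d)
    & forall C' C A (c : Hom C' C) (d : E C A), F C A d -> F C' A (pull c d)].

Definition injective_object (I : X) : Prop := forall (C : X) (d : E C I), d = 0.

Definition enough_injective_objects : Prop :=
  forall A : X, exists (I C : X) (x : Hom A I) (y : Hom I C) (d : E C A),
    real d x y /\ injective_object I.

Definition enough_projective_morphisms : Prop :=
  forall C : X, exists (K P : X) (x : Hom K P) (p : Hom P C) (g : E C K),
    real g x p /\ forall (A : X) (d : E C A), pull p d = 0.

Definition Ph (F : SubF) : Mor :=
  fun Y C phi => forall (A : X) (d : E C A), F Y A (pull phi d).

Definition inj (F : SubF) : Mor :=
  fun A Y i => forall (C : X) (d : E C A), F C A d -> push i d = 0.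

Definition star (I : Mor) : SubF :=
  fun Y A e => exists (C : X) (i : Hom Y C) (d : E C A), I Y C i /\ e = pull i d.

Definition enough_inj_mor (F : SubF) : Prop :=
  forall A : X, exists (B C : X) (e : Hom A B) (y : Hom B C) (d : E C A),
    [/\ real d e y, F C A d & inj F A B e].

Definition enough_special_inj_mor (F : SubF) : Prop :=
  forall A : X, exists (B C : X) (e : Hom A B) (y : Hom B C) (d : E C A),
    [/\ real d e y, F C A d, inj F A B e &
      exists (B' C' : X) (x' : Hom A B') (y' : Hom B' C') (d' : E C' A)
        (b : Hom B B') (phi : Hom C C'),
        [/\ real d' x' y', tri_mor d e y d' x' y' (idm A) b phi & Ph F C C' phi]].

Definition perp_right (M : Mor) : Mor :=
  fun A Y g => forall (Z C : X) (m : Hom Z C), M Z C m ->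
    forall d : E C A, pull m (push g d) = 0.

Definition perp_left (M : Mor) : Mor :=
  fun Z C g => forall (A Y : X) (m : Hom A Y), M A Y m ->
    forall d : E C A, pull g (push m d) = 0.

Definition cotorsion_pair (I J : Mor) : Prop :=
  [/\ is_ideal I, is_ideal J, mor_eq I (perp_left J) & mor_eq J (perp_right I)].

Definition special_precovering (I : Mor) : Prop :=
  forall C : X, exists (Y : X) (i : Hom Y C), I Y C i /\
    exists (A B A' : X) (x : Hom A B) (y : Hom B C) (d : E C A)
      (x' : Hom A' Y) (d' : E C A') (j : Hom A A') (b : Hom B Y),
      [/\ real d x y, real d' x' i, tri_mor d x y d' x' i j b (idm C)
        & perp_right I A A' j].

Definition special_preenveloping (J : Mor) : Prop :=
  forall A : X, exists (Y : X) (e : Hom A Y), J A Y e /\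
    exists (Z B C : X) (y : Hom Y Z) (d : E Z A)
      (x' : Hom A B) (y' : Hom B C) (d' : E C A) (b : Hom Y B) (j : Hom Z C),
      [/\ real d e y, real d' x' y', tri_mor d e y d' x' y' (idm A) b j
        & perp_left J Z C j].

Definition complete_cotorsion_pair (I J : Mor) : Prop :=
  [/\ cotorsion_pair I J, special_precovering I & special_preenveloping J].

Definition property_C (K : Mor) : Prop :=
  forall (A B I Y Z W : X) (x : Hom A B) (y : Hom B I) (g0 : E I A)
    (x' : Hom Y Z) (y' : Hom Z W) (d : E W Y)
    (f : Hom A Y) (g : Hom B Z) (h : Hom I W),
    real g0 x y -> real d x' y' -> tri_mor g0 x y d x' y' f g h ->
    injective_object I -> K A Y f -> K B Z g.

End Paper.

Arguments mor_sub {X}. Arguments mor_eq {X}. Arguments subF_sub {X}.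
Arguments is_ideal {X}. Arguments additive_subfunctor {X}.
Arguments Ph {X}. Arguments inj {X}. Arguments star {X}.
Arguments enough_inj_mor {X}. Arguments enough_special_inj_mor {X}.
Arguments perp_right {X}. Arguments perp_left {X}.
Arguments cotorsion_pair {X}. Arguments special_precovering {X}.
Arguments special_preenveloping {X}. Arguments complete_cotorsion_pair {X}.
Arguments property_C {X}.

(* Main.v *)
Require Import Defs.
From mathcomp Require Import all_boot all_algebra.
Set Warnings "-notation-overridden -ambiguous-paths".
Set Implicit Arguments. Unset Strict Implicit.
Import GRing.Theory.
Local Open Scope ring_scope.
Local Notation Hom := Defs.Hom.
Local Notation comp := Defs.comp.

Section Basic.
Variable X : ExtriCat.
Local Notation E := (Ext (eE X)).
Local Notation real := (@ereal X).

Lemma zero_of_double (V : zmodType) (x : V) : x = x + x -> x = 0.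
Proof. move=> h. by apply: (@addrI _ x); rewrite addr0 -h. Qed.

Lemma comp0l (A B C : X) (f : Hom A B) : comp (0 : Hom B C) f = 0.
Proof. apply: zero_of_double; by rewrite -comp_addl addr0. Qed.
Lemma comp0r (A B C : X) (g : Hom B C) : comp g (0 : Hom A B) = 0.
Proof. apply: zero_of_double; by rewrite -comp_addr addr0. Qed.
Lemma compNl (A B C : X) (g : Hom B C) (f : Hom A B) : comp (- g) f = - comp g f.
Proof. apply/eqP; rewrite -addr_eq0 -comp_addl addNr comp0l //. Qed.
Lemma compNr (A B C : X) (g : Hom B C) (f : Hom A B) : comp g (- f) = - comp g f.
Proof. apply/eqP; rewrite -addr_eq0 -comp_addr addNr comp0r //. Qed.

Lemma pull0 (C' C A : X) (c : Hom C' C) : pull c (0 : E C A) = 0.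
Proof. apply: zero_of_double; by rewrite -pull_add addr0. Qed.
Lemma push0 (C A A' : X) (a : Hom A A') : push a (0 : E C A) = 0.
Proof. apply: zero_of_double; by rewrite -push_add addr0. Qed.
Lemma pull0m (C' C A : X) (d : E C A) : pull (0 : Hom C' C) d = 0.
Proof. apply: zero_of_double; by rewrite -pull_addm addr0. Qed.
Lemma push0m (C A A' : X) (d : E C A) : push (0 : Hom A A') d = 0.
Proof. apply: zero_of_double; by rewrite -push_addm addr0. Qed.
Lemma pullN (C' C A : X) (c : Hom C' C) (d : E C A) : pull c (- d) = - pull c d.
Proof. apply/eqP; rewrite -addr_eq0 -pull_add addNr pull0 //. Qed.
Lemma pushN (C A A' : X) (a : Hom A A') (d : E C A) : push a (- d) = - push a d.
Proof. apply/eqP; rewrite -addr_eq0 -push_add addNr push0 //. Qed.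
Lemma pullNm (C' C A : X) (c : Hom C' C) (d : E C A) : pull (- c) d = - pull c d.
Proof. apply/eqP; rewrite -addr_eq0 -pull_addm addNr pull0m //. Qed.
Lemma pushNm (C A A' : X) (a : Hom A A') (d : E C A) : push (- a) d = - push a d.
Proof. apply/eqP; rewrite -addr_eq0 -push_addm addNr push0m //. Qed.

Lemma zero_ex : exists Z : X, idm Z = 0.
Proof. by case: (e_additive X) => -[Z hZ] _; exists Z. Qed.

Lemma to_zero (Z A : X) (hZ : idm Z = 0) (f : Hom A Z) : f = 0.
Proof. by rewrite -(comp_idl f) hZ comp0l. Qed.
Lemma from_zero (Z A : X) (hZ : idm Z = 0) (f : Hom Z A) : f = 0.
Proof. by rewrite -(comp_idr f) hZ comp0r. Qed.
Lemma ext_to_zero (Z C : X) (hZ : idm Z = 0) (d : E C Z) : d = 0.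
Proof. by rewrite -(push_id d) hZ push0m. Qed.

Lemma triv_tri (Z A : X) (hZ : idm Z = 0) :
  real (0 : E Z A) (idm A) (0 : Hom A Z).
Proof.
apply: (@e_zero X A Z A (idm A) 0 (idm A) 0).
split; rewrite ?comp_idl ?comp0l ?comp0r ?hZ ?addr0 //.
Qed.

Lemma triv_tri' (Z I : X) (hZ : idm Z = 0) :
  real (0 : E I Z) (0 : Hom Z I) (idm I).
Proof.
apply: (@e_zero X Z I I 0 (idm I) 0 (idm I)).
split; rewrite ?comp_idl ?comp0l ?comp0r ?hZ ?add0r //.
Qed.

Lemma biprod_ex (A B : X) : exists (S : X) (i1 : Hom A S) (i2 : Hom B S)
    (p1 : Hom S A) (p2 : Hom S B), is_biproduct i1 i2 p1 p2.
Proof. by case: (e_additive X) => _ /(_ A B). Qed.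

Lemma real_ex (C A : X) (d : E C A) : exists (B : X) (x : Hom A B) (y : Hom B C), real d x y.
Proof. by case: (e_class d). Qed.

Lemma own_infl (A B C : X) (d : E C A) (x : Hom A B) (y : Hom B C) : real d x y -> push x d = 0.
Proof.
move=> h. have [Z hZ] := zero_ex.
have [c [_ ->]] := e_ET3 h (@triv_tri Z B hZ) (erefl (comp (idm B) x)).
  by rewrite pull0.
Qed.

Lemma own_defl (A B C : X) (d : E C A) (x : Hom A B) (y : Hom B C) : real d x y -> pull y d = 0.
Proof.
move=> h. have [Z hZ] := zero_ex.
have [a [_ <-]] := e_ET3op (@triv_tri' Z B hZ) h (erefl (comp y (idm B))).
by rewrite push0.
Qed.

Lemma yx0 (A B C : X) (d : E C A) (x : Hom A B) (y : Hom B C) : real d x y -> comp y x = 0.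
Proof.
move=> h. have [Z hZ] := zero_ex.
have [c [<- _]] := e_ET3 (@triv_tri Z A hZ) h (erefl (comp x (idm A))).
by rewrite comp0r.
Qed.

Lemma fact_infl (A B C A' : X) (d : E C A) (x : Hom A B) (y : Hom B C) (a : Hom A A') :
  real d x y -> push a d = 0 -> exists a' : Hom B A', a = comp a' x.
Proof.
move=> h ha. have [S [i1 [i2 [p1 [p2 hb]]]]] := biprod_ex A' C.
have hz : real (0 : E C A') i1 p2 := e_zero hb.
have eq : push a d = pull (idm C) (0 : E C A') by rewrite pull0.
have [b [hb1 hb2]] := e_lifts h hz eq.
exists (comp p1 b). case: hb => h11 _ _ _ _.
by rewrite -comp_assoc hb1 comp_assoc h11 comp_idl.
Qed.

Lemma fact_defl (A B C C' : X) (d : E C A) (x : Hom A B) (y : Hom B C) (c : Hom C' C) :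
  real d x y -> pull c d = 0 -> exists c' : Hom C' B, c = comp y c'.
Proof.
move=> h hc. have [S [i1 [i2 [p1 [p2 hb]]]]] := biprod_ex A C'.
have hz : real (0 : E C' A) i1 p2 := e_zero hb.
have eq : push (idm A) (0 : E C' A) = pull c d by rewrite push0.
have [b [hb1 hb2]] := e_lifts hz h eq.
exists (comp b i2). case: hb => _ h22 _ _ _.
by rewrite comp_assoc -hb2 -comp_assoc h22 comp_idr.
Qed.

Lemma L1 (A M Y B C' : X) (eps : E Y A) (u : Hom A M) (v : Hom M Y)
  (del : E C' A) (e : Hom A B) (y : Hom B C') :
  real eps u v -> real del e y -> push e eps = 0 ->
  exists c : Hom Y C', eps = pull c del.
Proof.
move=> h1 h2 h0. have [a' ha'] := fact_infl h1 h0.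
have eq : comp a' u = comp e (idm A) by rewrite comp_idr ha'.
have [c [_ hc]] := e_ET3 h1 h2 eq.
by exists c; rewrite -hc push_id.
Qed.

Lemma L1' (K P C A' M : X) (gam : E C K) (x : Hom K P) (p : Hom P C)
  (eps : E C A') (u : Hom A' M) (v : Hom M C) :
  real gam x p -> real eps u v -> pull p eps = 0 ->
  exists g : Hom K A', eps = push g gam.
Proof.
move=> h1 h2 h0. have [c' hc'] := fact_defl h2 h0.
have eq : comp (idm C) p = comp v c' by rewrite comp_idl hc'.
have [a [_ ha]] := e_ET3op h1 h2 eq.
by exists a; rewrite ha pull_id.
Qed.

Lemma split_sec (A B C : X) (x : Hom A B) (y : Hom B C) :
  real (0 : E C A) x y -> exists s : Hom C B, comp y s = idm C.
Proof.
move=> h. have [S [i1 [i2 [p1 [p2 hb]]]]] := biprod_ex A C.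
have hz : real (0 : E C A) i1 p2 := e_zero hb.
have eq : push (idm A) (0 : E C A) = pull (idm C) (0 : E C A) by rewrite push0 pull0.
have [b [hb1 hb2]] := e_lifts hz h eq.
exists (comp b i2). case: hb => _ h22 _ _ _.
by rewrite comp_assoc -hb2 comp_idl h22.
Qed.

Lemma split_full (A B C : X) (x : Hom A B) (y : Hom B C) :
  real (0 : E C A) x y -> exists (s : Hom C B) (r : Hom B A),
    [/\ comp y s = idm C, comp r x = idm A & comp x r + comp s y = idm B].
Proof.
move=> h. have [S [i1 [i2 [p1 [p2 hb]]]]] := biprod_ex A C.
have hz : real (0 : E C A) i1 p2 := e_zero hb.
have [b [[b' [hb'1 hb'2]] [hbx hby]]] := ((e_class (0 : E C A)).2 _ _ _ _ _ _ hz).1 h.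
case: hb => h11 h22 h21 h12 hs.
have ey : y = comp p2 b' by rewrite -hby -comp_assoc hb'2 comp_idr.
exists (comp b i2), (comp p1 b'); split.
- by rewrite comp_assoc hby h22.
- by rewrite -hbx -comp_assoc (comp_assoc b' b) hb'1 comp_idl h11.
- rewrite -hbx ey.
  have ee : forall (T : X) (f : Hom T S) (g : Hom S T),
      comp (comp b f) (comp g b') = comp b (comp (comp f g) b').
    by move=> T f g; rewrite -comp_assoc (comp_assoc f).
  by rewrite !ee -comp_addr -comp_addl hs comp_idl hb'2.
Qed.

Lemma M1 (A B C W : X) (del : E C A) (x : Hom A B) (y : Hom B C) (xi : E W B) :
  real del x y -> push y xi = 0 -> exists xi0 : E W A, xi = push x xi0.
Proof.
move=> h h0. have [M [m [n hm]]] := real_ex xi.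
have [E0 [h' [dd [e [d'' [r1 [c1 [c2 [r2 [c3 c4]]]]]]]]]] := e_ET4 h hm.
rewrite h0 in r2. have [s hs] := split_sec r2.
exists (pull s d''). by rewrite push_pull c4 -pull_comp hs pull_id.
Qed.

Lemma hpb (A I J K P : X) (gam : E J A) (x : Hom A I) (q : Hom I J)
  (gP : E J K) (xk : Hom K P) (p : Hom P J) :
  real gam x q -> real gP xk p ->
  exists (M : X) (m2 : Hom K M) (e1 : Hom M I) (s : Hom A M),
    real (pull q gP) m2 e1 /\ push s gam = - push m2 gP.
Proof.
move=> hg hP. have [M [m2 [e1 hr]]] := real_ex (pull q gP).
have [E0 [h' [dd [e [d'' [r1 [c1 [c2 [r2 [c3 c4]]]]]]]]]] := e_ET4op hr hg.
have hz : pull x (pull q gP) = 0 by rewrite -pull_comp (yx0 hg) pull0m.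
rewrite hz in r2. have [sg [rr [hs1 hs2 hs3]]] := split_full r2.
set eps0 := push rr d''.
have hq : pull q (eps0 - gP) = 0.
  rewrite pull_add pullN /eps0 -push_pull -c4 -push_comp hs2 push_id.
  by rewrite subrr.
have [Q [u [v hv]]] := real_ex (eps0 - gP).
have [k hk] := L1' hg hv hq.
exists M, m2, e1, (comp h' sg + comp m2 k); split => //.
have e1' : eps0 = gP + push k gam by rewrite -hk addrC subrK.
have e2 : comp (comp h' sg) e = h' - comp m2 rr.
  rewrite -comp_assoc.
  have -> : comp sg e = idm E0 - comp dd rr by rewrite -hs3 (addrC (comp dd rr)) addrK.
  by rewrite comp_addr compNr comp_idr comp_assoc c1.
rewrite push_addm -{1}c3 -push_comp e2 push_addm pushNm (own_infl r1) add0r.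
rewrite push_comp -/eps0 e1' push_add push_comp.
by rewrite opprD addrNK.
Qed.

End Basic.

Section Main.
Variable X : ExtriCat.
Variable F : SubF X.
Local Notation E := (Ext (eE X)).
Local Notation real := (@ereal X).
Hypothesis hF : additive_subfunctor F.
Hypothesis hinj : enough_inj_mor F.
Hypothesis hEI : enough_injective_objects X.
Hypothesis hEP : enough_projective_morphisms X.

Lemma perp_right_ideal (M : Mor X) : is_ideal (perp_right M).
Proof.
split.
- by move=> A B Z C m _ d; rewrite push0m pull0.
- by move=> A B f g hf hg Z C m hm d; rewrite push_addm pull_add hf // hg // addr0.
- move=> A B C D u f v hf Z C' m hm d.
  by rewrite !push_comp -push_pull hf // push0.
Qed.

Lemma perp_left_ideal (M : Mor X) : is_ideal (perp_left M).
Proof.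
split.
- by move=> A B Y Z m _ d; rewrite pull0m.
- by move=> A B f g hf hg Y Z m hm d; rewrite pull_addm hf // hg // addr0.
- move=> A B C D u f v hf Y Z m hm d.
  by rewrite !pull_comp -push_pull hf // pull0.
Qed.

Lemma Ph_compl (Y C C' : X) (c : Hom C C') (psi : Hom Y C) :
  Ph F Y C psi -> Ph F Y C' (comp c psi).
Proof. by move=> h A d; rewrite pull_comp. Qed.

Lemma Ph_compr (Y' Y C : X) (psi : Hom Y C) (c : Hom Y' Y) :
  Ph F Y C psi -> Ph F Y' C (comp psi c).
Proof. case: hF => _ _ _ _ Fpull. by move=> h A d; rewrite pull_comp; apply: Fpull. Qed.

Lemma Ph_sub_pl : mor_sub (Ph F) (perp_left (inj F)).
Proof. by move=> Y C phi h A Y' m hm d; rewrite -push_pull (hm _ _ (h _ d)). Qed.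

Lemma pl_sub_Ph : mor_sub (perp_left (inj F)) (Ph F).
Proof.
move=> Z C m hm A d.
have [B [C' [e [y [del [h1 h2 h3]]]]]] := hinj A.
have h0 : push e (pull m d) = 0 by rewrite push_pull (hm _ _ e h3 d).
have [M [u [v hv]]] := real_ex (pull m d).
have [c ->] := L1 hv h1 h0.
by case: hF => _ _ _ _ Fpull; apply: Fpull.
Qed.

Lemma precover (J : X) : exists (K P B M : X) (xk : Hom K P) (p : Hom P J)
  (gP : E J K) (eK : Hom K B) (u : Hom B M) (phi : Hom M J),
  [/\ real gP xk p, inj F K B eK, real (push eK gP) u phi & Ph F M J phi].
Proof.
have [K [P [xk [p [gP [hP hproj]]]]]] := hEP J.
have [B [C [e [y [del [h1 h2 h3]]]]]] := hinj K.
have [M [u [phi hd]]] := real_ex (push e gP).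
exists K, P, B, M, xk, p, gP, e, u, phi; split => // A d.
case: hF => _ _ _ Fpush Fpull.
have [N [u' [v' hv]]] := real_ex d.
have [g ->] := L1' hP hv (hproj A d).
rewrite -push_pull; apply: Fpush.
have h0 : push e (pull phi gP) = 0 by rewrite push_pull (own_defl hd).
have [N' [u'' [v'' hv']]] := real_ex (pull phi gP).
have [c ->] := L1 hv' h1 h0.
by apply: Fpull.
Qed.

Lemma phantom_factor (J K B M Y : X)
  (gP : E J K) (eK : Hom K B) (u : Hom B M) (phi : Hom M J) (psi : Hom Y J) :
  inj F K B eK -> real (push eK gP) u phi -> Ph F Y J psi ->
  exists c : Hom Y M, psi = comp phi c.
Proof.
move=> he hd hpsi. apply: (fact_defl hd).
by rewrite -push_pull he.
Qed.

Lemma special_tri (A : X) : exists (I J M B : X) (x : Hom A I) (q : Hom I J)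
  (gam : E J A) (phi : Hom M J) (e : Hom A B) (y : Hom B M) (b : Hom B I),
  [/\ real gam x q, injective_object X I, Ph F M J phi, real (pull phi gam) e y
      & perp_right (Ph F) A B e
    /\ tri_mor (pull phi gam) e y gam x q (idm A) b phi].
Proof.
have [I [J [x [q [gam [hg hI]]]]]] := hEI A.
have [K [P [B' [M [xk [p [gP [eK [u [phi [hP heK hd hphi]]]]]]]]]]] := precover J.
have [B [e [y hy]]] := real_ex (pull phi gam).
have eq : push (idm A) (pull phi gam) = pull phi gam by rewrite push_id.
have [b [hb1 hb2]] := e_lifts hy hg eq.
exists I, J, M, B, x, q, gam, phi, e, y, b; split => //.
split; last by split => //; split.
move=> Z C m hm d3.
have h0 : push x d3 = 0 by apply: hI.
have [N [u' [v' hv]]] := real_ex d3.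
have [c0 hc0] := L1 hv hg h0.
have [c' hc'] := phantom_factor heK hd (Ph_compl c0 hm).
rewrite -push_pull hc0 -pull_comp hc' pull_comp push_pull (own_infl hy).
by rewrite pull0.
Qed.

Lemma perp_right_C : property_C (perp_right (Ph F)).
Proof.
move=> A B I Y Z W x y g0 x' y' d f g h hs ht [h1 [h2 h3]] hI hf.
move=> Z' C m hm dd.
have [xi0 ->] := M1 hs (hI _ (push y dd)).
by rewrite -push_comp h1 push_comp -push_pull hf // push0.
Qed.

Lemma C_inj (K : Mor X) (I Y : X) (r : Hom I Y) :
  is_ideal K -> property_C K -> injective_object X I -> K I Y r.
Proof.
move=> [K0 _ _] hC hI.
have [Z hZ] := zero_ex X.
apply: (hC Z I I Y Y Z 0 (idm I) 0 (idm Y) 0 0 0 r 0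
   (@triv_tri' X Z I hZ) (@triv_tri X Z Y hZ)) => //.
by rewrite /tri_mor !comp0r !comp0l push0 pull0.
Qed.

Lemma minimal (K : Mor X) : is_ideal K -> mor_sub (inj F) K -> property_C K ->
  mor_sub (perp_right (Ph F)) K.
Proof.
move=> hK hsub hC A Y g hg.
have hK' := hK; case: hK' => K0 KD KC.
have [I [J [x [q [gam [hgam hI]]]]]] := hEI A.
have [K1 [P [B [M [xk [p [gP [eK [u [phi [hP heK hd hphi]]]]]]]]]]] := precover J.
have hth : pull phi (push g gam) = 0 by apply: hg.
have [N [u1 [v1 hv]]] := real_ex (push g gam).
have [t ht] := L1' hd hv hth.
have [M' [m2 [e1 [s [hr hs]]]]] := hpb hgam hP.
have hz : push (comp (- t) eK) (pull q gP) = 0.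
  by rewrite push_comp pushNm !push_pull -ht -push_pull (own_defl hgam) push0 oppr0.
have [g2 hg2] := fact_infl hr hz.
have Kf : K K1 Y (comp (- t) eK).
  have := KC _ _ _ _ (- t) eK (idm K1) (hsub _ _ _ heK).
  by rewrite comp_idr.
have [Z hZ] := zero_ex X.
have Kg2 : K M' Y g2.
  apply: (hC K1 M' I Y Y Z m2 e1 (pull q gP) (idm Y) 0 0 (comp (- t) eK) g2 0
     hr (@triv_tri X Z Y hZ)) => //.
  split; first by rewrite comp_idl.
  split; first by rewrite !comp0l.
  by rewrite hz pull0.
have hr0 : push (g - comp g2 s) gam = 0.
  rewrite push_addm pushNm push_comp hs pushN -push_comp -hg2.
  by rewrite push_comp pushNm ht opprK subrr.
have [r' hr'] := fact_infl hgam hr0.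
have Kr : K A Y (g - comp g2 s).
  rewrite hr' -(comp_idl (comp r' x)); apply: KC.
  exact: C_inj.
have -> : g = (g - comp g2 s) + comp g2 s by rewrite subrK.
apply: KD => //.
rewrite -(comp_idl (comp g2 s)); exact: KC.
Qed.

Lemma pull_pull (C'' C' C A : X) (c : Hom C' C) (c' : Hom C'' C') (d : E C A) :
  pull c' (pull c d) = pull (comp c c') d.
Proof. by rewrite pull_comp. Qed.

Lemma star_additive : additive_subfunctor (star (Ph F)).
Proof.
case: hF => F0 FD FN Fpush Fpull.
split.
- move=> C A; exists C, 0, 0; split; last by rewrite pull0.
  by move=> A' d; rewrite pull0m.
- move=> C A _ _ [C1 [i1 [d1 [h1 ->]]]] [C2 [i2 [d2 [h2 ->]]]].
  have [S [j1 [j2 [q1 [q2 hb]]]]] := biprod_ex C1 C2.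
  case: hb => h11 h22 h21 h12 _.
  exists S, (comp j1 i1 + comp j2 i2), (pull q1 d1 + pull q2 d2); split.
    move=> A' d; rewrite pull_addm; apply: FD; rewrite pull_comp; [exact: h1|exact: h2].
  rewrite pull_addm !pull_add !pull_pull !comp_assoc.
  by rewrite h11 h22 h21 h12 !comp0l !comp_idl !pull0m addr0 add0r.
- move=> C A _ [C0 [i [d [h ->]]]]; exists C0, i, (- d); split => //.
  by rewrite pullN.
- move=> C A A' a _ [C0 [i [d [h ->]]]]; exists C0, i, (push a d); split => //.
  by rewrite push_pull.
- move=> C' C A c _ [C0 [i [d [h ->]]]]; exists C0, (comp i c), d; split.
    exact: Ph_compr.
  by rewrite pull_comp.
Qed.

Lemma perp_eq_inj : mor_eq (perp_right (Ph F)) (inj (star (Ph F))).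
Proof.
move=> A Y g; split.
- move=> hg C _ [C0 [i [d [hi ->]]]]; by rewrite push_pull hg.
- move=> hg Z C m hm d; rewrite -push_pull; apply: hg.
  by exists C, m, d.
Qed.

Lemma star_special : enough_special_inj_mor (star (Ph F)).
Proof.
move=> A.
have [I [J [M [B [x [q [gam [phi [e [y [b [hg hI hphi hy [hperp htri]]]]]]]]]]]]] := special_tri A.
exists B, M, e, y, (pull phi gam); split => //.
- by exists J, phi, gam.
- by apply/perp_eq_inj.
- exists I, J, x, q, gam, b, phi; split => // A' d.
  by exists J, phi, d.
Qed.

Lemma maximal (F' : SubF X) : additive_subfunctor F' -> subF_sub F' F ->
  enough_special_inj_mor F' -> subF_sub F' (star (Ph F)).
Proof.
move=> hF' hsub hspec C A del hdel.
have [B [C1 [e [y [d1 [hr hd1 hie [B' [C' [x' [y' [d' [b [phi [hr' [t1 [t2 t3]] hphi]]]]]]]]]]]]]] := hspec A.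
have h0 : push e del = 0 by apply: hie.
have [N [u [v hv]]] := real_ex del.
have [c hc] := L1 hv hr h0.
rewrite push_id in t3.
exists C', (comp phi c), d'; split.
  apply: Ph_compr => A' dd; apply: hsub; exact: hphi.
by rewrite hc t3 pull_pull.
Qed.

Lemma main_all :
  complete_cotorsion_pair (perp_left (inj F)) (perp_right (perp_left (inj F))) /\
  (mor_eq (perp_right (Ph F)) (inj (star (Ph F))) /\
   is_ideal (perp_right (Ph F)) /\
   mor_sub (inj F) (perp_right (Ph F)) /\
   property_C (perp_right (Ph F)) /\
   (forall K : Mor X, is_ideal K -> mor_sub (inj F) K -> property_C K ->
      mor_sub (perp_right (Ph F)) K)) /\
  (additive_subfunctor (star (Ph F)) /\
   subF_sub (star (Ph F)) F /\
   enough_special_inj_mor (star (Ph F)) /\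
   (forall F' : SubF X, additive_subfunctor F' -> subF_sub F' F ->
      enough_special_inj_mor F' -> subF_sub F' (star (Ph F)))).
Proof.
split; [|split].
- split.
  + split.
    * exact: perp_left_ideal.
    * exact: perp_right_ideal.
    * move=> Z C g; split.
        by move=> hg A Y m hm d; apply: hm.
      move=> hg A Y m hm d; apply: hg => Z' C' i hi dd; exact: hi.
    * by move=> A Y g.
  + move=> C.
    have [K [P [B [M [xk [p [gP [eK [u [phi [hP heK hd hphi]]]]]]]]]]] := precover C.
    exists M, phi; split; first exact: Ph_sub_pl.
    have eq : push eK gP = pull (idm C) (push eK gP) by rewrite pull_id.
    have [b0 [hb1 hb2]] := e_lifts hP hd eq.
    exists K, P, B, xk, p, gP, u, (push eK gP), eK, b0; split => //.
    by move=> Z C' m hm d; apply: hm.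
  + move=> A.
    have [I [J [M [B [x [q [gam [phi [e [y [b [hg hI hphi hy [hperp htri]]]]]]]]]]]]] := special_tri A.
    exists B, e; split.
      move=> Z C m hm d; apply: hperp; exact: pl_sub_Ph.
    exists M, I, J, y, (pull phi gam), x, q, gam, b, phi; split => //.
    move=> A' Y' m hm d; apply: hm; exact: Ph_sub_pl.
- split; first exact: perp_eq_inj.
  split; first exact: perp_right_ideal.
  split.
    move=> A Y m hm Z C psi hpsi d; rewrite -push_pull; apply: hm; exact: hpsi.
  split; first exact: perp_right_C.
  exact: minimal.
- split; first exact: star_additive.
  split; first by move=> C A _ [C0 [i [d [hi ->]]]]; apply: hi.
  split; first exact: star_special.
  exact: maximal.
Qed.

End Main.

Theorem theorem4p6 (X : ExtriCat) (F : SubF X) :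
  enough_injective_objects X ->
  enough_projective_morphisms X ->
  additive_subfunctor F ->
  enough_inj_mor F ->
  (* (1) *)
  complete_cotorsion_pair (perp_left (inj F)) (perp_right (perp_left (inj F))) /\
  (* (2) *)
  (mor_eq (perp_right (Ph F)) (inj (star (Ph F))) /\
   is_ideal (perp_right (Ph F)) /\
   mor_sub (inj F) (perp_right (Ph F)) /\
   property_C (perp_right (Ph F)) /\
   (forall K : Mor X, is_ideal K -> mor_sub (inj F) K -> property_C K ->
      mor_sub (perp_right (Ph F)) K)) /\
  (* (3) *)
  (additive_subfunctor (star (Ph F)) /\
   subF_sub (star (Ph F)) F /\
   enough_special_inj_mor (star (Ph F)) /\
   (forall F' : SubF X, additive_subfunctor F' -> subF_sub F' F ->
      enough_special_inj_mor F' -> subF_sub F' (star (Ph F)))).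
Proof.
move=> hEI hEP hF hinj.
exact: (main_all hF hinj hEI hEP).
Qed.
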